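(* Let $R$ be a finite Frobenius ring and $\mathcal P_{\rm hom}$ the partition of $R$ induced by the normalized homogeneous weight $\omega$. Then for every block $P$ of $\mathcal P_{\rm hom}$ and every $a\in R$, the sum $\sum_{b\in P}\chi(ab)$ is the same for all generating characters $\chi$ of $R$ (and is a real number). Consequently the right $\chi$-dual partition of $\mathcal P_{\rm hom}$ does not depend on the choice of the generating character $\chi$. *)

(* Defs.v *)
From HB Require Import structures.
From mathcomp Require Import all_boot all_order all_algebra all_field.
Set Implicit Arguments. Unset Strict Implicit. Unset Printing Implicit Defensive.
Import Order.TTheory GRing.Theory Num.Theory.
Local Open Scope ring_scope.

Definition is_additive_character (R : finNzRingType) (chi : R -> algC) : Prop :=
  chi 0 = 1 /\ forall x y : R, chi (x + y) = chi x * chi y.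

Definition is_left_ideal (R : finNzRingType) (I : {set R}) : Prop :=
  0 \in I /\ (forall x y, x \in I -> y \in I -> x + y \in I)
  /\ (forall x, x \in I -> - x \in I)
  /\ (forall r x, x \in I -> r * x \in I).

Definition char_ker (R : finNzRingType) (chi : R -> algC) : {set R} :=
  [set x | chi x == 1].

(* Generating character: a character whose kernel contains no nonzero
   left ideal (for finite rings equivalently no nonzero right ideal). *)
Definition generating_character (R : finNzRingType) (chi : R -> algC) : Prop :=
  is_additive_character chi /\
  forall I : {set R}, is_left_ideal I -> I \subset char_ker chi -> I = [set 0].

Definition frobenius_ring (R : finNzRingType) : Prop :=
  exists chi : R -> algC, generating_character chi.

Definition lprincipal (R : finNzRingType) (x : R) : {set R} :=
  [set r * x | r : R].

Definition normalized_homogeneous_weight (R : finNzRingType) (w : R -> rat) : Prop :=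
  [/\ w 0 = 0,
      (forall x y : R, lprincipal x = lprincipal y -> w x = w y)
    & (forall x : R, x != 0 ->
         \sum_(y in lprincipal x) w y = #|lprincipal x|%:R)].

(* A partition of R given by a labelling f : R -> T; its blocks are the
   nonempty fibres [set b | f b == f z]. The partition P_hom induced by
   the weight w is the partition into level sets of w (labelling w). *)

Definition right_dual_rel (R : finNzRingType) (T : eqType) (f : R -> T)
    (chi : R -> algC) (x y : R) : Prop :=
  forall z : R, \sum_(b : R | f b == f z) chi (x * b)
              = \sum_(b : R | f b == f z) chi (y * b).

(* Main.v *)
Require Import Defs.
From HB Require Import structures.
From mathcomp Require Import all_boot all_order all_algebra all_field.
Import Order.TTheory GRing.Theory Num.Theory.
Local Open Scope ring_scope.
Set Implicit Arguments. Unset Strict Implicit. Unset Printing Implicit Defensive.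

Lemma chiN (R : finNzRingType) (chi : R -> algC) :
  is_additive_character chi -> forall x, chi x * chi (- x) = 1.
Proof. by case=> h0 hD x; rewrite -hD subrr h0. Qed.

Lemma chi_neq0 (R : finNzRingType) (chi : R -> algC) :
  is_additive_character chi -> forall x, chi x != 0.
Proof.
move=> hc x; apply/eqP=> h; have := chiN hc x; rewrite h mul0r => /eqP.
by rewrite eq_sym oner_eq0.
Qed.

Lemma chi_exp (R : finNzRingType) (chi : R -> algC) :
  is_additive_character chi -> forall x, chi x ^+ #|R| = 1.
Proof.
move=> hc x; have [h0 hD] := hc.
have : \prod_(y : R) chi y = \prod_(y : R) chi (x + y).
  by rewrite (reindex_inj (addrI x)).
rewrite [X in _ = X -> _](eq_bigr (fun y => chi x * chi y)); last by move=> y _; rewrite hD.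
rewrite big_split /= prodr_const => /esym.
have hP : \prod_y chi y != 0.
  by apply/prodf_neq0=> y _; exact: chi_neq0.
rewrite -[X in _ = X]mul1r => /(mulIf hP) h.
by rewrite -h cardT.
Qed.

Lemma chi_conj (R : finNzRingType) (chi : R -> algC) :
  is_additive_character chi -> forall x, (chi x)^* = chi (- x).
Proof.
move=> hc x.
have hn : `|chi x| = 1.
  apply/eqP; rewrite -(pexpr_eq1 (n := #|R|)) //; last by apply/card_gt0P; exists x.
  by rewrite -normrX chi_exp // normr1.
have := normCK (chi x); rewrite hn expr1n => /esym h.
apply: (mulfI (chi_neq0 hc x)); by rewrite h chiN.
Qed.

Lemma sum_char0 (R : finNzRingType) (chi : R -> algC) :
  is_additive_character chi -> forall t, chi t != 1 -> \sum_x chi x = 0.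
Proof.
move=> [h0 hD] t ht.
have : \sum_x chi x = \sum_x chi (t + x) by rewrite (reindex_inj (addrI t)).
rewrite [X in _ = X -> _](eq_bigr (fun x => chi t * chi x)); last by move=> y _; rewrite hD.
rewrite -mulr_sumr => /eqP; rewrite -subr_eq0 -{1}[\sum_x chi x]mul1r -mulrBl.
by rewrite mulf_eq0 subr_eq0 eq_sym (negbTE ht) => /eqP.
Qed.

Lemma lprin_ideal (R : finNzRingType) (x : R) : is_left_ideal (lprincipal x).
Proof.
rewrite /is_left_ideal /lprincipal; split; first by apply/imsetP; exists 0; rewrite ?mul0r.
split; first by move=> a b /imsetP[r _ ->] /imsetP[s _ ->]; apply/imsetP; exists (r + s); rewrite ?mulrDl.
split; first by move=> a /imsetP[r _ ->]; apply/imsetP; exists (- r); rewrite ?mulNr.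
by move=> s a /imsetP[r _ ->]; apply/imsetP; exists (s * r); rewrite ?mulrA.
Qed.

Lemma mem_lprin (R : finNzRingType) (x : R) : x \in lprincipal x.
Proof. by apply/imsetP; exists 1; rewrite ?mul1r. Qed.

Lemma left_sum (R : finNzRingType) (chi : R -> algC) :
  generating_character chi -> forall u : R, u != 0 -> \sum_y chi (y * u) = 0.
Proof.
move=> [hc hg] u hu.
have hc' : is_additive_character (fun y => chi (y * u)).
  by case: hc => h0 hD; split; [rewrite mul0r | move=> a b; rewrite mulrDl hD].
case: (boolP [forall t, chi (t * u) == 1]) => [/forallP ht | /forallPn [t ht]].
  have : lprincipal u = [set 0].
    apply: hg; first exact: lprin_ideal.
    by apply/subsetP=> y /imsetP[r _ ->]; rewrite inE ht.
  by move=> h; move: (mem_lprin u); rewrite h inE (negbTE hu).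
exact: (sum_char0 hc' ht).
Qed.

Lemma sum_enum (R : finType) (G : R -> algC) :
  \sum_(j < #|R|) G (enum_val j) = \sum_y G y.
Proof. by rewrite -big_enum_val. Qed.

Lemma right_sum (R : finNzRingType) (chi : R -> algC) :
  generating_character chi -> forall u : R, u != 0 -> \sum_y chi (u * y) = 0.
Proof.
move=> hg u hu; have hc := hg.1; have [h0 hD] := hc.
set n := #|R|.
have hn : n%:R != 0 :> algC by rewrite pnatr_eq0 -lt0n; apply/card_gt0P; exists 0.
have key : forall a b : R, \sum_y chi (y * (a - b)) = if a == b then n%:R else 0.
  move=> a b; case: eqP => [->|/eqP hab]; last by apply: left_sum; rewrite // subr_eq0.
  rewrite subrr (eq_bigr (fun _ => 1)) ?sumr_const // => y _; by rewrite mulr0.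
pose E : 'M[algC]_n := \matrix_(i, j) chi (enum_val j * enum_val i).
pose F : 'M[algC]_n := \matrix_(i, j) (n%:R^-1 * chi (- (enum_val i * enum_val j))).
have EF : E *m F = 1%:M.
  apply/matrixP=> i k; rewrite !mxE.
  rewrite (eq_bigr (fun j : 'I_n => n%:R^-1 * chi (enum_val j * (enum_val i - enum_val k)))); last first.
    by move=> j _; rewrite !mxE mulrCA -hD mulrBr.
  rewrite -mulr_sumr (sum_enum (fun y => chi (y * (enum_val i - enum_val k)))) key.
  rewrite (inj_eq enum_val_inj).
  by case: eqP => _; rewrite ?mulr0 ?mulVf.
have FE := mulmx1C EF.
have := congr1 (fun M : 'M_n => M (enum_rank 0) (enum_rank u)) FE; rewrite !mxE.
rewrite (inj_eq enum_rank_inj) eq_sym (negbTE hu) /=.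
rewrite (eq_bigr (fun j : 'I_n => n%:R^-1 * chi (u * enum_val j))); last first.
  by move=> j _; rewrite !mxE !enum_rankK -mulrA -hD mul0r oppr0 add0r.
rewrite -mulr_sumr (sum_enum (fun y => chi (u * y))) => /eqP.
by rewrite mulf_eq0 invr_eq0 (negbTE hn) => /eqP.
Qed.

Lemma param (R : finNzRingType) (chi1 chi2 : R -> algC) :
  generating_character chi1 -> generating_character chi2 ->
  exists r : R, (forall x, chi2 x = chi1 (x * r)) /\ injective (fun x => x * r).
Proof.
move=> g1 g2; have c1 := g1.1; have c2 := g2.1.
have [h10 h1D] := c1; have [h20 h2D] := c2.
set n := #|R|.
have hn : n%:R != 0 :> algC by rewrite pnatr_eq0 -lt0n; apply/card_gt0P; exists 0.
have S : \sum_r \sum_x chi2 x * chi1 (- (x * r)) = n%:R.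
  rewrite exchange_big (bigD1 0) //= [X in _ + X]big1 ?addr0.
    rewrite (eq_bigr (fun _ => 1)) ?sumr_const // => r _; by rewrite mul0r oppr0 h20 h10 mulr1.
  move=> x hx; rewrite (eq_bigr (fun r => chi2 x * chi1 ((- x) * r))); last first.
    by move=> r _; rewrite mulNr.
  by rewrite -mulr_sumr right_sum ?mulr0 // oppr_eq0.
case: (boolP [exists r, \sum_x chi2 x * chi1 (- (x * r)) != 0]); last first.
  rewrite negb_exists => /forallP h; move: S; rewrite big1 => [/eqP|r _].
    by rewrite eq_sym (negbTE hn).
  by move: (h r); rewrite negbK => /eqP.
move=> /existsP [r hr].
have cp : is_additive_character (fun x => chi2 x * chi1 (- (x * r))).
  split; first by rewrite h20 mul0r oppr0 h10 mulr1.
  by move=> a b; rewrite h2D mulrDl opprD h1D mulrACA.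
have all1 : forall t, chi2 t * chi1 (- (t * r)) = 1.
  move=> t; apply/eqP; apply: contraR hr => ht.
  by rewrite (sum_char0 cp ht).
have E : forall x, chi2 x = chi1 (x * r).
  move=> x; rewrite -[chi2 x]mulr1 -(chiN c1 (x * r)) mulrCA.
  by rewrite all1 mulr1.
exists r; split=> // a b hab.
have h0 : forall x, x * r = 0 -> x = 0.
  move=> x hx; have : lprincipal x = [set 0].
    apply: g2.2; first exact: lprin_ideal.
    by apply/subsetP=> y /imsetP[s _ ->]; rewrite inE E -mulrA hx mulr0 h10.
  by move=> h; move: (mem_lprin x); rewrite h inE => /eqP.
by apply/eqP; rewrite -subr_eq0; apply/eqP/h0; rewrite mulrBl hab subrr.
Qed.

Lemma lprin_mulr (R : finNzRingType) (x r : R) :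
  lprincipal (x * r) = [set y * r | y in lprincipal x].
Proof.
rewrite /lprincipal -imset_comp; apply: eq_imset => s /=; by rewrite mulrA.
Qed.

Lemma lprin_sub (R : finNzRingType) (x y : R) :
  y \in lprincipal x -> lprincipal y \subset lprincipal x.
Proof.
move=> /imsetP[s _ ->]; apply/subsetP=> z /imsetP[t _ ->].
by apply/imsetP; exists (t * s); rewrite ?mulrA.
Qed.

Lemma w_inv (R : finNzRingType) (w : R -> rat) (hw : normalized_homogeneous_weight w)
  (r : R) (hr : injective (fun x => x * r)) : forall b, w (b * r) = w b.
Proof.
case: hw => w0 wc ws.
have main : forall n x, (#|lprincipal x| <= n)%N -> w (x * r) = w x.
  elim=> [|n IH] x hx.
    by move: hx; rewrite leqn0 => /eqP/card0_eq/(_ x); rewrite mem_lprin.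
  have [->|xn0] := eqVneq x 0; first by rewrite mul0r.
  have xr0 : x * r != 0.
    by apply: contra xn0 => /eqP h; apply/eqP; apply: hr; rewrite /= h mul0r.
  set G := lprincipal x.
  have S : \sum_(y in G) (w (y * r) - w y) = 0.
    have E1 : \sum_(y in G) w (y * r) = #|G|%:R.
      rewrite -(card_imset (mem G) hr) -(lprin_mulr x r) -(ws _ xr0) (lprin_mulr x r).
      rewrite [RHS]big_imset //.
      by move=> a b _ _; apply: hr.
    by rewrite sumrB E1 (ws x xn0) subrr.
  move: S; rewrite (bigID (fun y => lprincipal y == G)) /= [X in _ + X]big1 ?addr0; last first.
    move=> y /andP [yG hyG]; apply/eqP; rewrite subr_eq0; apply/eqP/IH.
    have hp : lprincipal y \proper G by rewrite properEneq hyG lprin_sub.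
    by rewrite -ltnS; apply: leq_trans (proper_card hp) hx.
  rewrite (eq_bigr (fun _ => w (x * r) - w x)); last first.
    move=> y /andP [yG /eqP hyG]; congr (_ - _); apply: wc => //.
    by rewrite !lprin_mulr hyG.
  rewrite sumr_const => /eqP; rewrite mulrn_eq0 => /orP [|]; last by rewrite subr_eq0 => /eqP.
  have hx' : (x \in G) && (lprincipal x == G) by rewrite mem_lprin eqxx.
  by move=> /eqP /card0_eq /(_ x); rewrite /in_mem /= hx'.
by move=> b; apply: (main _ b (leqnn _)).
Qed.

Theorem mainTheorem2 (R : finNzRingType) (hF : frobenius_ring R)
    (w : R -> rat) (hw : normalized_homogeneous_weight w) :
  (forall (z a : R) (chi1 chi2 : R -> algC),
      generating_character chi1 -> generating_character chi2 ->
      \sum_(b : R | w b == w z) chi1 (a * b)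
        = \sum_(b : R | w b == w z) chi2 (a * b)
      /\ (\sum_(b : R | w b == w z) chi1 (a * b)) \is Num.real)
  /\
  (forall chi1 chi2 : R -> algC,
      generating_character chi1 -> generating_character chi2 ->
      forall x y : R, right_dual_rel w chi1 x y <-> right_dual_rel w chi2 x y).
Proof.
have P1 : forall (z a : R) (chi1 chi2 : R -> algC),
      generating_character chi1 -> generating_character chi2 ->
      \sum_(b : R | w b == w z) chi1 (a * b)
        = \sum_(b : R | w b == w z) chi2 (a * b)
      /\ (\sum_(b : R | w b == w z) chi1 (a * b)) \is Num.real.
  move=> z a chi1 chi2 g1 g2.
  have [r [E hr]] := param g1 g2.
  split.
    rewrite (reindex_inj hr) /=; apply: eq_big => b; first by rewrite w_inv.
    by move=> _; rewrite E mulrA.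
  have hN : injective (fun x : R => x * -1) by move=> u v /=; rewrite !mulrN1 => /oppr_inj.
  apply/CrealP; rewrite rmorph_sum /=.
  rewrite [RHS](reindex_inj hN) /=; apply: eq_big => b; first by rewrite w_inv.
  by move=> _; rewrite (chi_conj g1.1) mulrN1 mulrN.
split=> // chi1 chi2 g1 g2 x y; rewrite /right_dual_rel.
split=> h z; first by rewrite -!(P1 z _ _ _ g1 g2).1.
by rewrite !(P1 z _ _ _ g1 g2).1.
Qed.
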